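(* Let $I=\langle N,M,V\rangle$ be an ordered instance of goods, let $k>0$ be an integer and let $S\subset M$ be a set of $k-1$ goods. Suppose that for each agent $i\in N$, $B_i$ is a bundle in some MMS partition of $i$ with $|B_i|=k$ and $S\subset B_i$. Then there is an agent $i'\in N$ such that allocating $B_{i'}$ to $i'$ is a valid reduction.
   Context: An instance $I=\langle N,M,V\rangle$ has agents $N=\{1,\dots,n\}$, goods $M=\{1,\dots,m\}$ and additive valuations $v_i$ with $v_i(\emptyset)=0$, $v_i(S)=\sum_{g\in S}v_i(\{g\})$, $v_{ij}:=v_i(\{j\})\ge 0$. It is ordered if $v_{ij}\ge v_{i(j+1)}$ for all $i$ and $1\le j<m$. An allocation ($n$-partition) is an ordered $n$-tuple of pairwise disjoint, possibly empty subsets of $M$ with union $M$. The maximin share of $i$ in $I$ is $\mu_i^I=\max_A\min_j v_i(A_j)$ over all allocations; an MMS partition of $i$ is an allocation $A$ with $v_i(A_j)\ge\mu_i^I$ for all $j$. Removing agents $N'\subseteq N$ and items $M'\subseteq M$ is a valid reduction if the items of $M'$ can be allocated to the agents of $N'$ so that each $i'\in N'$ receives a bundle $B_{i'}$ with $v_{i'}(B_{i'})\ge\mu_{i'}^I$, and every $i\in N\setminus N'$ satisfies $\mu_i^{I'}\ge\mu_i^I$, where $I'=\langle N\setminus N', M\setminus M', V\rangle$ (valuations restricted, maximin share computed with $|N\setminus N'|$ bundles). ''Allocating $B$ to $i$ is a valid reduction'' means this holds with $N'=\{i\}$, $M'=B$. *)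

(* Defs.v *)
From mathcomp Require Import all_boot all_order all_algebra.
Set Implicit Arguments. Unset Strict Implicit. Unset Printing Implicit Defensive.
Import Order.TTheory GRing.Theory Num.Theory.
Local Open Scope ring_scope.

Section Fair.
Variables (R : realFieldType) (n m : nat).
Implicit Types (v : 'I_n -> 'I_m -> R) (i : 'I_n) (G B : {set 'I_m}).

Definition val v i B : R := \sum_(g in B) v i g.

Definition nonneg_vals v : Prop := forall i g, 0 <= v i g.

Definition ordered v : Prop :=
  forall i (g g' : 'I_m), nat_of_ord g' = (nat_of_ord g).+1 -> v i g' <= v i g.

(* An allocation of the goods G into k bundles is given by an assignment
   A : goods -> 'I_k; bundle j is [set g in G | A g == j]. *)
Definition bundle k (A : {ffun 'I_m -> 'I_k}) G (j : 'I_k) : {set 'I_m} :=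
  [set g in G | A g == j].

(* min_j v_i(A_j); the seed val v i G is >= every bundle value for
   nonnegative valuations, so this is the exact minimum whenever k >= 1. *)
Definition minval v i G k (A : {ffun 'I_m -> 'I_k}) : R :=
  \big[Num.min/val v i G]_(j < k) val v i (bundle A G j).

(* maximin share of agent i for goods G split into k bundles
   (exact for k >= 1 and nonnegative valuations). *)
Definition mms v i G k : R :=
  \big[Num.max/0]_(A : {ffun 'I_m -> 'I_k}) minval v i G A.

Definition mu v i : R := mms v i setT n.

Definition mms_partition v i (A : {ffun 'I_m -> 'I_n}) : Prop :=
  forall j : 'I_n, mu v i <= val v i (bundle A setT j).

Definition in_mms_partition v i B : Prop :=
  exists A : {ffun 'I_m -> 'I_n}, mms_partition v i A /\
    exists j : 'I_n, B = bundle A setT j.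

(* allocating B to i is a valid reduction: the reduced instance has
   agents N \ {i} (n-1 of them) and goods M \ B. *)
Definition valid_reduction v i B : Prop :=
  mu v i <= val v i B /\
  forall i' : 'I_n, i' != i -> mu v i' <= mms v i' (~: B) n.-1.

End Fair.

(* Main.v *)
Require Import Defs.
From mathcomp Require Import all_boot all_order all_algebra zify.
Import Order.TTheory GRing.Theory Num.Theory.
Local Open Scope ring_scope.

Lemma ordered_le (R : realFieldType) (n m : nat) (v : 'I_n -> 'I_m -> R)
  (hord : ordered v) (i : 'I_n) (g g' : 'I_m) : (g <= g')%N -> v i g' <= v i g.
Proof.
move=> h.
suff H : forall d (g' : 'I_m), nat_of_ord g' = (g + d)%N -> v i g' <= v i g.
  by apply: (H (g' - g)%N); rewrite subnKC.
elim=> [|d IH] g2 e.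
  by rewrite addn0 in e; rewrite (val_inj e).
have lt : (g + d < m)%N by have := ltn_ord g2; rewrite e addnS => /ltnW.
apply: le_trans (IH (Ordinal lt) erefl).
by apply: hord; rewrite /= e addnS.
Qed.

Lemma val_mono (R : realFieldType) (n m : nat) (v : 'I_n -> 'I_m -> R)
  (hnn : nonneg_vals v) (i : 'I_n) (X Y : {set 'I_m}) :
  X \subset Y -> Defs.val v i X <= Defs.val v i Y.
Proof.
move=> sXY; rewrite /Defs.val [X in _ <= X](big_setID X) /=.
have -> : Y :&: X = X by apply/setIidPr.
rewrite lerDl.
by apply: sumr_ge0 => g _; apply: hnn.
Qed.

Lemma mms_ge (R : realFieldType) (n' m : nat) (v : 'I_n'.+1 -> 'I_m -> R)
  (hnn : nonneg_vals v) (i : 'I_n'.+1) (G : {set 'I_m}) (mu0 : R)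
  (f : 'I_m -> 'I_n'.+1) (j : 'I_n'.+1) (npos : (0 < n')%N)
  (hG : forall g, g \in G -> f g != j)
  (hb : forall l, l != j -> mu0 <= Defs.val v i [set g in G | f g == l]) :
  mu0 <= mms v i G n'.
Proof.
case: n' v i f j npos hG hb hnn => // n'' v i f j _ hG hb hnn.
pose A := [ffun g => odflt ord0 (unlift j (f g))].
apply: le_trans (le_bigmax _ _ A).
rewrite /minval.
apply: (big_ind (fun x => mu0 <= x)).
- have h := hb (lift j ord0) ltac:(by rewrite eq_sym neq_lift); apply: le_trans h _.
  by apply: val_mono => //; apply/subsetP => g; rewrite inE => /andP[].
- by move=> x y hx hy; rewrite le_min hx.
move=> l _.
have -> : bundle A G l = [set g in G | f g == lift j l].
  apply/setP => g; rewrite !inE /A ffunE.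
  case gG: (g \in G) => //=.
  case: unliftP => [k -> | e].
    by rewrite /= (inj_eq (@lift_inj _ j)).
  by move: (hG g gG); rewrite e eqxx.
by apply: hb; rewrite eq_sym neq_lift.
Qed.

Lemma mms_ge2 (R : realFieldType) (n m : nat) (v : 'I_n -> 'I_m -> R)
  (hnn : nonneg_vals v) (i : 'I_n) (G : {set 'I_m}) (mu0 : R)
  (f : 'I_m -> 'I_n) (j : 'I_n) (n_gt1 : (1 < n)%N)
  (hG : forall g, g \in G -> f g != j)
  (hb : forall l, l != j -> mu0 <= Defs.val v i [set g in G | f g == l]) :
  mu0 <= mms v i G n.-1.
Proof.
case: n v i f j n_gt1 hG hb hnn => [|[|n'']] // v i f j _ hG hb hnn.
by apply: (@mms_ge R n''.+1 m v hnn i G mu0 f j).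

Qed.

Lemma decomp (m k : nat) (S X : {set 'I_m}) (k_gt0 : (0 < k)%N)
  (hS : #|S| = k.-1) (hX : #|X| = k) (hSX : S \subset X) :
  exists2 g, g \notin S & X = g |: S.
Proof.
have c : #|X :\: S| == 1%N.
  rewrite cardsD (setIidPr hSX) hS hX; move: k_gt0; case: (k) => // k' _ /=; by rewrite subSn // subnn.
case/cards1P: c => x hx.
have xin : x \in X :\: S by rewrite hx set11.
exists x; first by move: xin; rewrite inE => /andP[].
by rewrite -(setID X S) (setIidPr hSX) hx setUC.
Qed.

Theorem lemma12 (R : realFieldType) (n m : nat) (v : 'I_n -> 'I_m -> R)
  (n_gt0 : (0 < n)%N)
  (hnn : nonneg_vals v) (hord : ordered v)
  (k : nat) (k_gt0 : (0 < k)%N)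
  (S : {set 'I_m}) (hS : #|S| = k.-1)
  (B : 'I_n -> {set 'I_m})
  (hB : forall i, in_mms_partition v i (B i))
  (hBk : forall i, #|B i| = k)
  (hSB : forall i, S \subset B i) :
  exists i', valid_reduction v i' (B i').
Proof.
have hg (i : 'I_n) := @decomp m k S (B i) k_gt0 hS (hBk i) (hSB i).
pose w i := (\sum_(x in B i) (x : nat))%N.
pose i0 : 'I_n := Ordinal n_gt0.
exists [arg max_(i > i0) w i].
case: arg_maxnP => // i' _ hmax.
have [gi' gi'S hBi'] := hg i'.
split.
  by case: (hB i') => A [hA [j ->]]; apply: hA.
move=> i ne.
have n_gt1 : (1 < n)%N.
  have := ltn_ord i; have := ltn_ord i'; move: ne; rewrite -(inj_eq val_inj) /=.
  move: (nat_of_ord i) (nat_of_ord i') => a b; move/eqP; lia.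
have [gi giS hBi] := hg i.
have gle : (gi <= gi')%N.
  have := hmax i isT; rewrite /w hBi hBi' !big_setU1 //=.
  by rewrite leq_add2r.
case: (hB i) => A [hA [j hj]].
have hAj g : (A g == j) = (g == gi) || (g \in S).
  by rewrite -in_setU1 -hBi hj !inE.
pose f g := if g == gi then A gi' else A g.
apply: (@mms_ge2 R n m v hnn i (~: B i') (mu v i) f j n_gt1).
  move=> g; rewrite hBi' !inE negb_or => /andP[ng' ngS]; rewrite /f.
  case: (eqVneq g gi) => [eg|ngi].
    by rewrite hAj negb_or gi'S andbT eq_sym -eg.
  by rewrite hAj negb_or ngi ngS.
move=> l nl.
have hAl g : A g == l -> (g != gi) && (g \notin S).
  move=> /eqP e; have : A g != j by rewrite e.
  by rewrite hAj negb_or.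
apply: le_trans (hA l) _.
have inX g : (g \in bundle A setT l) = (A g == l) by rewrite !inE.
case: (boolP ((gi == gi') || (A gi' != l))) => hc.
  apply: val_mono => //; apply/subsetP => g; rewrite inX => hg1.
  have /andP[ngi ngS] := hAl g hg1.
  rewrite !inE hBi' !inE negb_or ngS andbT /f (negbTE ngi) hg1 andbT.
  case/orP: hc => [/eqP <- // | hc]; apply/eqP => e; move: hc; by rewrite -e hg1.
move: hc; rewrite negb_or negbK => /andP[ne' hgl].
have gi'X : gi' \in bundle A setT l by rewrite inX.
have giX : gi \notin bundle A setT l :\ gi'.
  by rewrite !inE negb_and; apply/orP; right; apply/negP => /hAl; rewrite eqxx.
apply: (@le_trans _ _ (Defs.val v i (gi |: (bundle A setT l :\ gi')))); last first.
  apply: val_mono => //; apply/subsetP => g; rewrite !inE => /orP[/eqP -> | /andP[ng' hg1]].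
    by rewrite /f eqxx hgl hBi' !inE negb_or giS ne'.
  rewrite /= in hg1; have /andP[ngi ngS] := hAl g hg1.
  by rewrite /f (negbTE ngi) hg1 hBi' !inE negb_or ngS ng'.
rewrite /Defs.val big_setU1 //= (big_setD1 gi' gi'X) /= lerD2r.
exact: ordered_le.
Qed.
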